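(* Let $f=a_0+a_1x+\cdots+a_nx^n\in\mathbb{Z}[x]$ be a primitive polynomial. Suppose that $a_0=\pm p^k d$ and $\gcd(a_0,a_1,a_2)=p^k$ for some positive integers $k$ and $d$ and a prime number $p$, where $p\nmid a_3 d$ and $\gcd(k,3)=1$, and that every zero $\theta\in\mathbb{C}$ of $f$ satisfies $|\theta|>d$. Then $f$ is irreducible in $\mathbb{Z}[x]$.
   Context: A polynomial $a_0+a_1x+\cdots+a_nx^n\in\mathbb{Z}[x]$ is primitive if $\gcd(a_0,a_1,\ldots,a_n)=1$. Coefficients $a_i$ with $i>n$ are taken to be $0$. *)

(* Defs.v *)
From HB Require Import structures.
From mathcomp Require Import all_boot all_order all_algebra all_field.
Set Implicit Arguments. Unset Strict Implicit. Unset Printing Implicit Defensive.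
Import Order.TTheory GRing.Theory Num.Theory.
Local Open Scope ring_scope.

Definition primitive_intpoly (f : {poly int}) : Prop :=
  (\big[gcdn/0%N]_(i < size f) absz (f`_i)%R)%N = 1%N.

Definition irreducible_in_Zx (f : {poly int}) : Prop :=
  f != 0 /\ f \isn't a GRing.unit /\
  forall g h : {poly int}, f = g * h -> g \is a GRing.unit \/ h \is a GRing.unit.

(* Main.v *)
Require Import Defs.
From HB Require Import structures.
From mathcomp Require Import all_boot all_order all_algebra all_field.
From mathcomp Require Import zify ring.
Import Order.TTheory GRing.Theory Num.Theory.
Local Open Scope ring_scope.
Definition vz (p : nat) (x : int) := logn p `|x|%N.
Notation D p e x := (((p ^ e)%N%:Z %| x)%Z).

Lemma dvv p e x : prime p -> x != 0 -> D p e x = (e <= vz p x)%N.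
Proof. by move=> pp x0; rewrite dvdzE /= pfactor_dvdn // absz_gt0. Qed.

Lemma vzM p x y : x != 0 -> y != 0 -> vz p (x * y) = (vz p x + vz p y)%N.
Proof. by move=> x0 y0; rewrite /vz abszM lognM // absz_gt0. Qed.

Lemma Dmono p e e' x : (e <= e')%N -> D p e' x -> D p e x.
Proof. move=> le; apply: dvdz_trans; rewrite dvdzE /= dvdn_exp2l //. Qed.

Lemma D1 p x : D p 1 x = (p %| `|x|)%N.
Proof. by rewrite dvdzE /= expn1. Qed.

Lemma arith (p i j : nat) (b0 b1 b2 c0 c1 c2 : int) : prime p -> (0 < i)%N -> (0 < j)%N ->
  gcdn (i + j) 3 = 1%N -> b0 != 0 -> c0 != 0 -> vz p b0 = i -> vz p c0 = j ->
  ~~ (p %| `|b1|)%N -> (p %| `|c1|)%N -> ~~ (p %| `|c2|)%N ->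
  D p (i + j) (b0 * c1 + b1 * c0) -> D p (i + j) (b0 * c2 + b1 * c1 + b2 * c0) -> False.
Proof.
move=> pp i0 j0 g3 b00 c00 vb vc nb1 dc1 nc2 Da1 Da2.
have b10 : b1 != 0 by apply: contra nb1 => /eqP ->; rewrite dvdn0.
have c20 : c2 != 0 by apply: contra nc2 => /eqP ->; rewrite dvdn0.
have vb1 : vz p b1 = 0%N by rewrite /vz logn_coprime // prime_coprime.
have vc2 : vz p c2 = 0%N by rewrite /vz logn_coprime // prime_coprime.
have vbc : vz p (b1 * c0) = j by rewrite vzM // vb1 vc.
have vbc2 : vz p (b0 * c2) = i by rewrite vzM // vb vc2 addn0.
have ij : (i < j)%N.
  rewrite ltnNge; apply/negP => ji.
  have h1 : D p j.+1 (b0 * c1).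
    rewrite -addn1 expnD PoszM; apply: dvdz_mul; first by rewrite dvv // vb.
    by rewrite D1.
  have h2 : D p j.+1 (b0 * c1 + b1 * c0) by apply: Dmono Da1; clear -i0; lia.
  rewrite rpredDl // dvv ?mulf_neq0 // vbc in h2; clear -h2 ji; lia.
have nj1 : ~~ D p j.+1 (b0 * c1).
  apply/negP => h1.
  have h2 : D p j.+1 (b0 * c1 + b1 * c0) by apply: Dmono Da1; clear -i0; lia.
  rewrite rpredDl // dvv ?mulf_neq0 // vbc in h2; clear -h2 i0; lia.
have c10 : c1 != 0 by apply: contra nj1 => /eqP ->; rewrite mulr0 dvdz0.
have hj : D p j (b0 * c1).
  have h2 : D p j (b0 * c1 + b1 * c0) by apply: Dmono Da1; clear; lia.
  by rewrite rpredDr // in h2; rewrite dvv ?mulf_neq0 // vbc.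
rewrite dvv ?mulf_neq0 // in nj1; rewrite dvv ?mulf_neq0 // in hj.
have vc1 : vz p c1 = (j - i)%N by move: nj1 hj; rewrite vzM // vb; move: (vz p c1) => v; clear; lia.
have vbc1 : vz p (b1 * c1) = (j - i)%N by rewrite vzM // vb1.
have D3 e : (e <= j)%N -> D p e (b2 * c0).
  by move=> le; apply: dvdz_mull; rewrite dvv // vc.
have [lt1|lt2|eq] := ltngtP i (j - i)%N.
- have h : D p i.+1 (b0 * c2 + b1 * c1 + b2 * c0) by apply: Dmono Da2; clear -lt1 ij; lia.
  have e1 : D p i.+1 (b2 * c0) by apply: D3; clear -ij; lia.
  have e2 : D p i.+1 (b1 * c1) by rewrite dvv ?mulf_neq0 // vbc1; clear -lt1; lia.
  rewrite rpredDr // rpredDr // dvv ?mulf_neq0 // vbc2 in h; clear -h; lia.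
- have h : D p (j - i).+1 (b0 * c2 + b1 * c1 + b2 * c0) by apply: Dmono Da2; clear -lt2 ij; lia.
  have e1 : D p (j - i).+1 (b2 * c0) by apply: D3; clear -i0 ij; lia.
  have e2 : D p (j - i).+1 (b0 * c2) by rewrite dvv ?mulf_neq0 // vbc2; clear -lt2; lia.
  rewrite rpredDr // rpredDl // dvv ?mulf_neq0 // vbc1 in h; clear -h; lia.
- have : (i + j = 3 * i)%N by clear -eq ij; lia.
  move=> e; rewrite e gcdnC gcdnMr in g3; discriminate.
Qed.
Lemma unitz_abs (c : int) : (c \is a GRing.unit) = (`|c|%N == 1%N).
Proof. by case: c => [[|[|n]]|[|n]]. Qed.

Lemma prod_gt (d : algC) (r : seq algC) : 1 <= d -> r != [::] ->
  (forall z, z \in r -> d < `|z|) -> d < \prod_(z <- r) `|z|.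
Proof.
move=> d1; case: r => [//|z0 r] _ H.
rewrite big_cons.
have h1 : 1 <= \prod_(z <- r) `|z|.
  have Hr w : w \in r -> d < `|w| by move=> wr; apply: H; rewrite inE wr orbT.
  elim: r Hr {H} => [|z r IH] H; first by rewrite big_nil.
  rewrite big_cons.
  have h : 1 <= \prod_(z <- r) `|z| by apply: IH => w wr; apply: H; rewrite !inE wr !orbT.
  apply: (le_trans h); rewrite ler_peMl ?prodr_ge0 //.
  by apply: (le_trans d1); apply/ltW/H; rewrite !inE eqxx.
have h0 : d < `|z0| by apply: H; rewrite mem_head.
apply: (lt_le_trans h0); rewrite ler_peMr //.
Qed.

Lemma root_bound {f g h : {poly int}} {d : nat} : f = g * h -> (0 < d)%N -> (2 <= size g)%N ->
  (forall theta : algC, root (map_poly intr f) theta -> (d%:R < `|theta|)) ->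
  (d < `|(g`_0)%R|)%N.
Proof.
move=> fgh d0 sg H.
pose G : {poly algC} := map_poly intr g.
have sG : size G = size g by rewrite size_map_inj_poly //; apply: intr_inj.
have [r Dr] := closed_field_poly_normal G.
have rG z : z \in r -> root G z.
  move=> zr; rewrite Dr rootZ ?root_prod_XsubC //.
  by rewrite lead_coef_eq0 -size_poly_eq0 sG -lt0n (leq_trans _ sg).
have rne : r != [::].
  apply/eqP => r0; move: sG; rewrite Dr r0 big_nil alg_polyC size_polyC.
  by case: (_ != 0) => /= e; rewrite -e in sg.
have G0 : G.[0] = (g`_0)%:~R by rewrite horner_coef0 coef_map.
have lc1 : 1 <= `|lead_coef G|.
  rewrite lead_coef_map_inj //; last exact: intr_inj.
  rewrite -intr_norm ler1z -gtz0_ge1 normr_gt0 lead_coef_eq0.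
  by rewrite -size_poly_eq0 -lt0n (leq_trans _ sg).
have : (d%:R : algC) < `|G.[0]|.
  rewrite {1}Dr hornerZ horner_prod normrM.
  apply: (lt_le_trans _ (ler_peMl _ lc1)); last exact: normr_ge0.
  rewrite normr_prod.
  under eq_bigr do rewrite hornerXsubC sub0r normrN.
  apply: prod_gt => //; first by rewrite ler1n.
  move=> z zr; apply: H; rewrite fgh rmorphM rootM; apply/orP; left; exact: rG.
by rewrite G0 -intr_norm -natr_absz ltr_nat.
Qed.
Lemma coefs (g h : {poly int}) : (g*h)`_1 = g`_0*h`_1 + g`_1*h`_0 /\
  (g*h)`_2 = g`_0*h`_2 + g`_1*h`_1 + g`_2*h`_0 /\
  (g*h)`_3 = g`_0*h`_3 + g`_1*h`_2 + g`_2*h`_1 + g`_3*h`_0.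
Proof. by rewrite !coefM !big_ord_recr !big_ord0 /= !add0r !subn0 !subnn. Qed.

Lemma constfac {f g h : {poly int}} : primitive_intpoly f -> f != 0 -> f = g * h ->
  (size g <= 1)%N -> g \is a GRing.unit.
Proof.
move=> prim fnz fgh sg.
have Dg := size1_polyC sg.
have dv : (`|(g`_0)%R| %| 1)%N.
  rewrite -prim; apply/dvdn_biggcdP => i _.
  move: (nat_of_ord i) => n; move: Dg; set c := g`_0 => Dg; by rewrite fgh Dg coefCM abszM dvdn_mulr.
have g01 : `|(g`_0)%R|%N = 1%N by apply/eqP; rewrite -dvdn1.
have g0nz : g`_0 != 0 by apply/eqP => e; rewrite e in g01.
by rewrite poly_unitE Dg size_polyC g0nz coefC eqxx unitz_abs g01.
Qed.

Lemma logpos {p k d x : nat} : prime p -> (0 < x)%N -> (x %| p ^ k * d)%N -> ~~ (p %| d)%N ->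
  (d < x)%N -> (0 < logn p x)%N.
Proof.
move=> pp x0 dv pd dx; rewrite lt0n; apply/negP => /eqP l0.
have px : ~~ (p %| x)%N.
  by apply/negP => px; move: l0; have := pfactor_dvdn 1 pp x0; rewrite expn1 px => /esym; case: logn.
have cx : coprime x (p ^ k) by apply: coprimeXr; rewrite coprime_sym prime_coprime.
rewrite Gauss_dvdr // in dv.
have d0 : (0 < d)%N by move: pd; case: (d) => //; rewrite dvdn0.
by have := dvdn_leq d0 dv; rewrite leqNgt dx.
Qed.

Theorem theorem24 (f : {poly int}) (p k d : nat) :
  primitive_intpoly f ->
  prime p -> (0 < k)%N -> (0 < d)%N ->
  (f`_0 = (p ^ k * d)%N%:Z \/ f`_0 = - (p ^ k * d)%N%:Z) ->
  gcdn (gcdn (absz (f`_0)%R) (absz (f`_1)%R)) (absz (f`_2)%R) = (p ^ k)%N ->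
  ~~ (p %| (absz (f`_3)%R) * d)%N ->
  gcdn k 3 = 1%N ->
  (forall theta : algC, root (map_poly intr f) theta -> (d%:R < `|theta|)) ->
  irreducible_in_Zx f.
Proof.
move=> prim pp k0 d0 f0 gcdH nd3 gk3 Hroot.
rewrite Euclid_dvdM // negb_or in nd3; case/andP: nd3 => pa3 pd.
have af0 : `|(f`_0)%R|%N = (p ^ k * d)%N by case: f0 => ->; rewrite ?abszN.
have pk0 : (0 < p ^ k * d)%N by rewrite muln_gt0 expn_gt0 prime_gt0.
have f0nz : f`_0 != 0 by apply/eqP => e; move: af0; rewrite e /= => e'; rewrite -e' in pk0.
have fnz : f != 0 by apply: contra f0nz => /eqP ->; rewrite coef0.
have dk1 : (p ^ k %| `|(f`_1)%R|)%N by rewrite -gcdH (dvdn_trans (dvdn_gcdl _ _)) ?dvdn_gcdr.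
have dk2 : (p ^ k %| `|(f`_2)%R|)%N by rewrite -gcdH dvdn_gcdr.
split => //; split.
  have g1 : (1 < p ^ k * d)%N.
    apply: (leq_trans (prime_gt1 pp)); apply: (leq_trans _ (leq_pmulr _ d0)).
    rewrite -{1}(expn1 p); apply: leq_pexp2l => //; exact: prime_gt0.
  by rewrite poly_unitE unitz_abs af0 (gtn_eqF g1) andbF.
move=> g h fgh.
have [sg|sg] := leqP (size g) 1; first by left; exact: (constfac prim fnz fgh sg).
have [sh|sh] := leqP (size h) 1; first by right; apply: (constfac prim fnz _ sh); rewrite fgh mulrC.
exfalso.
have dg := root_bound fgh d0 sg Hroot.
have dh : (d < `|(h`_0)%R|)%N by apply: (root_bound _ d0 sh Hroot); rewrite fgh mulrC.
have [c1 [c2 c3]] := coefs g h; rewrite -fgh in c1 c2 c3.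
have e0 : (`|(g`_0)%R| * `|(h`_0)%R|)%N = (p ^ k * d)%N by rewrite -abszM -coef0M -fgh.
have g0nz : g`_0 != 0 by apply/eqP => e; move: dg; rewrite e.
have h0nz : h`_0 != 0 by apply/eqP => e; move: dh; rewrite e.
set i := logn p `|(g`_0)%R|; set j := logn p `|(h`_0)%R|.
have ijk : (i + j)%N = k.
  rewrite /i /j -lognM ?absz_gt0 // e0 lognM ?d0 // ?expn_gt0 ?prime_gt0 // (pfactorK k pp).
  by rewrite logn_coprime ?addn0 // prime_coprime.
have i0 : (0 < i)%N by apply: (logpos (k:=k) pp _ _ pd dg); rewrite ?absz_gt0 // -e0 dvdn_mulr.
have j0 : (0 < j)%N by apply: (logpos (k:=k) pp _ _ pd dh); rewrite ?absz_gt0 // -e0 dvdn_mull.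
have Da1 : D p (i + j) (f`_1) by rewrite dvdzE /= ijk.
have Da2 : D p (i + j) (f`_2) by rewrite dvdzE /= ijk.
have pg0 : D p 1 (g`_0) by rewrite dvv.
have ph0 : D p 1 (h`_0) by rewrite dvv.
have na3 : ~~ D p 1 (f`_3) by rewrite D1.
have p2 : D p 1 (f`_2) by apply: Dmono Da2; clear -i0; lia.
rewrite c2 in p2.
have p11 : D p 1 (g`_1 * h`_1).
  have t1 : D p 1 (g`_2 * h`_0) by apply: dvdz_mull.
  have t2 : D p 1 (g`_0 * h`_2) by apply: dvdz_mulr.
  by rewrite rpredDr // rpredDl // in p2.
rewrite c3 in na3.
rewrite D1 abszM Euclid_dvdM // in p11.
have [pg1|pg1] := boolP (p %| `|(g`_1)%R|)%N.
- have nh1 : ~~ (p %| `|(h`_1)%R|)%N.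
    apply/negP => ph1; move/negP: na3; apply.
    by rewrite !rpredD //; first [ by apply: dvdz_mulr | by apply: dvdz_mull | by apply: dvdz_mulr; rewrite D1 | by apply: dvdz_mull; rewrite D1 ].
  have ng2 : ~~ (p %| `|(g`_2)%R|)%N.
    apply/negP => pg2; move/negP: na3; apply.
    by rewrite !rpredD //; first [ by apply: dvdz_mulr | by apply: dvdz_mull | by apply: dvdz_mulr; rewrite D1 | by apply: dvdz_mull; rewrite D1 ].
  apply: (arith p j i (h`_0) (h`_1) (h`_2) (g`_0) (g`_1) (g`_2) pp) => //.
  + by rewrite addnC ijk.
  + have -> : h`_0 * g`_1 + h`_1 * g`_0 = f`_1 by rewrite c1; ring.
    by rewrite addnC.
  + have -> : h`_0 * g`_2 + h`_1 * g`_1 + h`_2 * g`_0 = f`_2 by rewrite c2; ring.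
    by rewrite addnC.
- have ph1 : (p %| `|(h`_1)%R|)%N by move: p11; rewrite (negbTE pg1).
  have nh2 : ~~ (p %| `|(h`_2)%R|)%N.
    apply/negP => ph2; move/negP: na3; apply.
    by rewrite !rpredD //; first [ by apply: dvdz_mulr | by apply: dvdz_mull | by apply: dvdz_mulr; rewrite D1 | by apply: dvdz_mull; rewrite D1 ].
  apply: (arith p i j (g`_0) (g`_1) (g`_2) (h`_0) (h`_1) (h`_2) pp) => //.
  + by rewrite ijk.
  + by rewrite -c1.
  + by rewrite -c2.
Qed.
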